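(* Let $P=(T;U,V)$ be a 3M-DAP with $2 \le v < u$, and let $\lambda = x_u - x_v$, $\gamma = x_t/t$. Define \[ h(y) = \frac{1}{2}\,\frac{(u-v)y - \lambda}{\gamma(u-v) - \lambda}. \] Then $h$ is an increasing linear function, and applying $h$ entrywise to any feasible solution of $P$ yields a feasible solution of the 3M-DAP $\hat P = (\hat T; \hat U, \hat V)$ with the same matrix dimensions as $P$ and with required row sums $\hat x_t = t/2$ and $\hat x_u = \hat x_v$ (namely $\hat x_u = \hat x_v = \tfrac12 \frac{u x_v - v x_u}{\gamma(u-v)-\lambda}$); in particular $\hat P$ is in standard form and $P$ is equivalent to $\hat P$ with equivalence function $h$.
   Context: A three-matrix division and assignment problem (3M-DAP) $P=(T;U,V)$ is specified by integers $t,u,v$ (numbers of columns), integers $s_t, s_u, s_v$ (numbers of rows) and rationals $x_t, x_u, x_v$ (required row sums), subject to: $t \ge 2$, $u \ge 2$, $v \ge 1$; if $v = 1$ then $v s_v \le (t-2)s_t$; $s_t > 0$, $s_u > 0$, $s_v \ge 0$; $s_u u + s_v v = s_t t$; $s_u x_u + s_v x_v = s_t x_t$; and $x_u/u < x_v/v$. A feasible solution assigns real values to the entries of an $s_t\times t$ matrix $T$, an $s_u \times u$ matrix $U$ and an $s_v \times v$ matrix $V$ so that every row of $T$, $U$, $V$ sums to $x_t$, $x_u$, $x_v$ respectively, and the multiset of entries of $T$ equals the multiset union of the entries of $U$ and $V$. A 3M-DAP is in standard form if $x_u - x_v = 0$ and $x_t/t = 1/2$. Two 3M-DAPs are equivalent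 if their matrices have the same dimensions and there is an increasing linear function mapping the entries of solutions of the first to the entries of solutions of the second. *)

(* Defs.v *)
From HB Require Import structures.
From mathcomp Require Import all_boot all_order all_algebra.
Set Implicit Arguments. Unset Strict Implicit. Unset Printing Implicit Defensive.
Import Order.TTheory GRing.Theory Num.Theory.
Local Open Scope ring_scope.

(* Parameters of a three-matrix division and assignment problem (3M-DAP). *)
Record dap := DAP {
  dt : nat; du : nat; dv : nat;      (* numbers of columns t, u, v *)
  dst : nat; dsu : nat; dsv : nat;   (* numbers of rows s_t, s_u, s_v *)
  dxt : rat; dxu : rat; dxv : rat    (* required row sums x_t, x_u, x_v *)
}.

Definition is_3MDAP (P : dap) : Prop :=
  [/\ (2 <= dt P)%N, (2 <= du P)%N & (1 <= dv P)%N] /\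
  (dv P = 1%N -> (dv P * dsv P <= (dt P - 2) * dst P)%N) /\
  (0 < dst P)%N /\ (0 < dsu P)%N /\
  (dsu P * du P + dsv P * dv P = dst P * dt P)%N /\
  (dsu P)%:R * dxu P + (dsv P)%:R * dxv P = (dst P)%:R * dxt P /\
  dxu P / (du P)%:R < dxv P / (dv P)%:R.

Definition standard_form (P : dap) : Prop :=
  dxu P - dxv P = 0 /\ dxt P / (dt P)%:R = 1 / 2.

(* Multiset of entries of a matrix, as a sequence. *)
Definition entries (R : Type) m n (A : 'M[R]_(m, n)) : seq R :=
  [seq A p.1 p.2 | p <- enum {: 'I_m * 'I_n}].

Definition feasible (R : realFieldType) (P : dap)
  (T : 'M[R]_(dst P, dt P)) (U : 'M[R]_(dsu P, du P)) (V : 'M[R]_(dsv P, dv P))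
  : Prop :=
  [/\ forall i, \sum_j T i j = ratr (dxt P),
      forall i, \sum_j U i j = ratr (dxu P),
      forall i, \sum_j V i j = ratr (dxv P)
    & perm_eq (entries T) (entries U ++ entries V)].

Definition increasing_linear (R : realFieldType) (f : R -> R) : Prop :=
  exists a b : R, 0 < a /\ forall y, f y = a * y + b.

Definition equivalent_via (R : realFieldType) (P P' : dap) (f : R -> R) : Prop :=
  [/\ (dt P' = dt P /\ du P' = du P /\ dv P' = dv P),
      (dst P' = dst P /\ dsu P' = dsu P /\ dsv P' = dsv P),
      increasing_linear f
    & forall T U V, @feasible R P T U V ->
        exists T' U' V', @feasible R P' T' U' V' /\
          [/\ entries T' = map f (entries T),
              entries U' = map f (entries U)
            & entries V' = map f (entries V)]].

Definition lam (P : dap) : rat := dxu P - dxv P.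
Definition gam (P : dap) : rat := dxt P / (dt P)%:R.

Definition hfun (R : realFieldType) (P : dap) (y : R) : R :=
  2^-1 * (((du P)%:R - (dv P)%:R) * y - ratr (lam P))
        / ratr (gam P * ((du P)%:R - (dv P)%:R) - lam P).

Definition xhat (P : dap) : rat :=
  2^-1 * ((du P)%:R * dxv P - (dv P)%:R * dxu P)
        / (gam P * ((du P)%:R - (dv P)%:R) - lam P).

Definition Phat (P : dap) : dap :=
  DAP (dt P) (du P) (dv P) (dst P) (dsu P) (dsv P)
      ((dt P)%:R / 2) (xhat P) (xhat P).

(* Main.v *)
Require Import Defs.
From HB Require Import structures.
From mathcomp Require Import all_boot all_order all_algebra.
From mathcomp Require Import ring lra.
Import Order.TTheory GRing.Theory Num.Theory.
Local Open Scope ring_scope.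

Lemma keyK (u v t su sv st : nat) (xu xv xt : rat) : t <> 0%N ->
  (su*u + sv*v = st*t)%N -> su%:R*xu + sv%:R*xv = st%:R*xt ->
  st%:R * t%:R * (xt/t%:R*(u%:R - v%:R) - (xu-xv)) = (su+sv)%:R*(u%:R*xv - v%:R*xu).
Proof.
move=> t0 Hn Hx.
have Ht : t%:R != 0 :> rat by rewrite pnatr_eq0; apply/eqP.
have E : st%:R*t%:R = su%:R*u%:R + sv%:R*v%:R :> rat by rewrite -!natrM -natrD Hn.
have -> : st%:R * t%:R * (xt/t%:R*(u%:R - v%:R) - (xu-xv)) =
   st%:R*xt*(u%:R-v%:R) - st%:R*t%:R*(xu-xv) :> rat by field.
rewrite -Hx E natrD; ring.
Qed.

Lemma sum_lin (R : realFieldType) n (a b : R) (y : 'I_n -> R) :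
  \sum_(j < n) (a * y j + b) = a * \sum_j y j + n%:R * b.
Proof.
by rewrite big_split /= -mulr_sumr sumr_const card_ord mulr_natl.
Qed.

Lemma entries_map (R : Type) m n (f : R -> R) (A : 'M[R]_(m, n)) :
  entries (map_mx f A) = map f (entries A).
Proof. by rewrite /entries -map_comp; apply: eq_map => p; rewrite /= mxE. Qed.

Theorem theorem2 (R : realFieldType) (P : dap) :
  is_3MDAP P -> (2 <= dv P)%N -> (dv P < du P)%N ->
  [/\ increasing_linear (@hfun R P),
      (forall T U V, @feasible R P T U V ->
         @feasible R (Phat P) (map_mx (@hfun R P) T) (map_mx (@hfun R P) U)
                              (map_mx (@hfun R P) V)),
      is_3MDAP (Phat P) /\ standard_form (Phat P),
      dxt (Phat P) = (dt P)%:R / 2 /\ dxu (Phat P) = dxv (Phat P)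
    & equivalent_via P (Phat P) (@hfun R P)].
Proof.
case: P => t u v st su sv xt xu xv.
rewrite /is_3MDAP /=.
move=> [[t2 u2 v1] [_ [st0 [su0 [Hn [Hx Hlt]]]]]] v2 vu.
rewrite /hfun /Phat /xhat /lam /gam /=.
set D := xt / t%:R * (u%:R - v%:R) - (xu - xv).
have t0 : t <> 0%N by move=> e; rewrite e in t2.
have K := @keyK u v t su sv st xu xv xt t0 Hn Hx.
rewrite -/D in K.
have up : (0 : rat) < u%:R by rewrite ltr0n; apply: leq_trans u2.
have vp : (0 : rat) < v%:R by rewrite ltr0n; apply: leq_trans v2.
have tp : (0 : rat) < t%:R by rewrite ltr0n; apply: leq_trans t2.
have W : 0 < u%:R*xv - v%:R*xu.
  have : 0 < (xv/v%:R - xu/u%:R) * (u%:R * v%:R).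
    by apply: mulr_gt0; [rewrite subr_gt0 | apply: mulr_gt0].
  have -> : (xv/v%:R - xu/u%:R) * (u%:R * v%:R) = u%:R*xv - v%:R*xu.
    by field; apply/andP; split; rewrite gt_eqF.
  by [].
have Dp : 0 < D.
  have : 0 < st%:R * t%:R * D.
    rewrite K; apply: mulr_gt0 => //; rewrite ltr0n addn_gt0 su0 //.
  by rewrite pmulr_rgt0 // mulr_gt0 // ltr0n.
have D0 : D != 0 by rewrite gt_eqF.
have DR : (0 : R) < ratr D by rewrite ltr0q.
set A := 2^-1 * (u%:R - v%:R) / D.
set B := - (2^-1 * (xu - xv) / D).
have hE : forall y : R, 2^-1 * ((u%:R - v%:R : R) * y - ratr (xu - xv)) / ratr D
    = ratr A * y + ratr B.
  move=> y; rewrite /A /B.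
  rewrite rmorphN !rmorphM /= !fmorphV /= rmorphB /= !ratr_nat.
  have : ratr D != 0 :> R by rewrite gt_eqF.
  move=> HD; field.
  exact: HD.
have Ap : 0 < A.
  rewrite /A; apply: divr_gt0 => //; apply: mulr_gt0; first by [].
  by rewrite subr_gt0 ltr_nat.
have inc : increasing_linear (fun y : R =>
    2^-1 * ((u%:R - v%:R : R) * y - ratr (xu - xv)) / ratr D).
  exists (ratr A), (ratr B); split; last exact: hE.
  by rewrite ltr0q.
have feas : forall (T : 'M[R]_(st, t)) (U : 'M[R]_(su, u)) (V : 'M[R]_(sv, v)),
  feasible (P:=DAP t u v st su sv xt xu xv) T U V ->
  feasible (P:=DAP t u v st su sv (t%:R / 2) (2^-1 * (u%:R * xv - v%:R * xu) / D)
                                           (2^-1 * (u%:R * xv - v%:R * xu) / D))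
    (map_mx (fun y : R => 2^-1 * ((u%:R - v%:R : R) * y - ratr (xu - xv)) / ratr D) T)
    (map_mx (fun y : R => 2^-1 * ((u%:R - v%:R : R) * y - ratr (xu - xv)) / ratr D) U)
    (map_mx (fun y : R => 2^-1 * ((u%:R - v%:R : R) * y - ratr (xu - xv)) / ratr D) V).
  move=> T U V [/= HT HU HV Hp]; split => /=.
  - move=> i; under eq_bigr => j _ do rewrite mxE hE.
    rewrite sum_lin HT -(ratr_nat R t) -!rmorphM -rmorphD; congr ratr.
    have -> : A * xt + t%:R * B = 2^-1 * (xt*(u%:R-v%:R) - t%:R*(xu-xv)) / D.
      by rewrite /A /B; field.
    have DE : xt*(u%:R-v%:R) - t%:R*(xu-xv) = D * t%:R.
      by rewrite /D; field; rewrite gt_eqF.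
    by rewrite DE; field.
  - move=> i; under eq_bigr => j _ do rewrite mxE hE.
    rewrite sum_lin HU -(ratr_nat R u) -!rmorphM -rmorphD; congr ratr.
    by rewrite /A /B; field.
  - move=> i; under eq_bigr => j _ do rewrite mxE hE.
    rewrite sum_lin HV -(ratr_nat R v) -!rmorphM -rmorphD; congr ratr.
    by rewrite /A /B; field.
  - by rewrite !entries_map -map_cat perm_map.
split.
- exact: inc.
- exact: feas.
- split.
  + split; first by split.
    split; first by move=> e; rewrite e in v2.
    do 3 split => //.
    split.
      rewrite -mulrDl -natrD.
      have -> : (su + sv)%:R * (2^-1 * (u%:R * xv - v%:R * xu) / D) =
        ((su + sv)%:R * (u%:R * xv - v%:R * xu)) / (2 * D) by field.
      by rewrite -K; field.
    rewrite ltr_pM2l ?ltf_pV2 ?posrE ?ltr_nat //.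
    apply: divr_gt0 => //; apply: mulr_gt0 => //.
  + split => /=; [by rewrite subrr | field; rewrite pnatr_eq0; apply/eqP; exact: t0].
- by split.
- split; [by [] | by [] | exact: inc | move=> T U V HF].
  exists (map_mx (fun y : R => 2^-1 * ((u%:R - v%:R : R) * y - ratr (xu - xv)) / ratr D) T).
  exists (map_mx (fun y : R => 2^-1 * ((u%:R - v%:R : R) * y - ratr (xu - xv)) / ratr D) U).
  exists (map_mx (fun y : R => 2^-1 * ((u%:R - v%:R : R) * y - ratr (xu - xv)) / ratr D) V).
  by split; [exact: feas | split; rewrite entries_map].
Qed.
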